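(* For every $k \geq 2$ and every $m$ with $k \le m \le 2k-2$, the number of Grassmannian permutations of $[m]$ that avoid $\operatorname{id}_k = 12\cdots k$ equals \[ \sum_{j=1}^{2k-m} (-1)^{j-1}\, j \binom{2k-m-j}{j} C_{k-j}, \] where $C_n = \frac{1}{n+1}\binom{2n}{n}$ is the $n$-th Catalan number (and $\binom{a}{b}=0$ when $b>a\ge 0$).
   Context: A permutation of $[m]$ is Grassmannian if it has at most one descent (one-line notation). A permutation $\sigma$ contains a pattern $\pi$ of size $k$ if some subsequence of $\sigma$ of length $k$ is order-isomorphic to $\pi$; otherwise $\sigma$ avoids $\pi$. *)

(* Defs.v *)
From mathcomp Require Import all_boot all_order all_algebra all_fingroup.
Set Implicit Arguments. Unset Strict Implicit. Unset Printing Implicit Defensive.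
Import GRing.Theory.

(* A permutation of [m] is s : 'S_m (values 0..m-1 stand for 1..m);
   its one-line notation is s 0, s 1, ..., s (m-1). *)

Definition descents (m : nat) (s : 'S_m) : {set 'I_m} :=
  [set i : 'I_m | [exists j : 'I_m, (val j == (val i).+1) && (s j < s i)]].

Definition grassmannian (m : nat) (s : 'S_m) : bool := #|descents s| <= 1.

Definition contains (m k : nat) (s : 'S_m) (p : 'S_k) : bool :=
  [exists f : {ffun 'I_k -> 'I_m},
     [forall a : 'I_k, forall b : 'I_k,
        ((a < b) ==> (f a < f b)) && ((s (f a) < s (f b)) == (p a < p b))]].

Definition avoids (m k : nat) (s : 'S_m) (p : 'S_k) : bool := ~~ contains s p.

Definition id_pat (k : nat) : 'S_k := 1%g.

Definition catalan (n : nat) : nat := 'C(n.*2, n) %/ n.+1.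

(* Main.v *)
Set Warnings "-notation-overridden,-ambiguous-paths".
Require Import Defs.
From mathcomp Require Import all_boot all_order all_algebra all_fingroup.
From mathcomp Require Import zify ring.
Import GRing.Theory.
Local Open Scope ring_scope.

Lemma catalanE n : catalan n = ('C(n.*2, n) - 'C(n.*2, n.+1))%N.
Proof.
rewrite /catalan.
have h := mul_bin_left n.*2 n.
have e : (n.*2 - n = n)%N by lia.
rewrite e in h.
rewrite {1}(_ : 'C(n.*2, n) = (('C(n.*2, n) - 'C(n.*2, n.+1)) * n.+1)%N).
  by rewrite mulnK.
rewrite mulnBl (mulnC _ n.+1) (mulnC _ n.+1) h mulSn addnK //.
Qed.

Definition ft (n k j : nat) : int := (-1) ^+ j * (('C(n - j, j) * catalan (k - j))%N)%:Z.
Definition gt (n k j : nat) : int :=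
  (-1) ^+ (j.-1) * ((j * 'C(n - j, j) * catalan (k - j))%N)%:Z.
Definition Fsum N n k : int := \sum_(j < N) ft n k j.
Definition Gsum N n k : int := \sum_(j < N) gt n k j.
Definition Pb m x : nat := (\sum_(i < x) 'C(m, i))%N.
Definition Fc n k : int := ('C(k.*2 - n, k))%:Z - ('C(k.*2 - n, k.+1))%:Z.
Definition Lc n k : int := (Pb (k.*2 - n) k)%:Z - (Pb (k.*2 - n) (k - n).+1)%:Z
   - (n%:Z - 1) * ('C(k.*2 - n, k))%:Z.

Lemma binP n j : 'C(n.+1 - j, j.+1) = ('C(n - j, j.+1) + 'C(n - j, j))%N.
Proof.
case: (leqP j n) => h; first by rewrite subSn // binS.
have -> : (n.+1 - j = 0)%N by lia.
have -> : (n - j = 0)%N by lia.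
by rewrite !bin0n; case: j h.
Qed.

Lemma PbS m x : Pb m.+1 x.+1 = (Pb m x.+1 + Pb m x)%N.
Proof.
elim: x => [|x IH]; first by rewrite /Pb !big_ord1 big_ord0 !bin0.
rewrite /Pb big_ord_recr /= -/(Pb m.+1 x.+1) IH.
rewrite /Pb (big_ord_recr x.+1) (big_ord_recr x) /= binS; lia.
Qed.

Lemma ft_rec n k j : ft n.+2 k.+1 j.+1 = ft n.+1 k.+1 j.+1 - ft n k j.
Proof.
rewrite /ft !subSS binP !PoszM PoszD exprS; ring.
Qed.

Lemma gt_rec n k j : gt n.+2 k.+1 j.+1 = gt n.+1 k.+1 j.+1 - gt n k j + ft n k j.
Proof.
rewrite /gt /ft !subSS binP !PoszM PoszD /=.
case: j => [|j] /=; first by ring.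
rewrite !exprS; ring.
Qed.

Lemma catalanZ n : (catalan n)%:Z = ('C(n.*2, n))%:Z - ('C(n.*2, n.+1))%:Z.
Proof.
rewrite catalanE subzn //.
have h := mul_bin_left n.*2 n.
have e : (n.*2 - n = n)%N by lia.
rewrite e in h.
have : (n.+1 * 'C(n.*2, n.+1) <= n.+1 * 'C(n.*2, n))%N by rewrite h leq_mul2r leqnSn orbT.
by rewrite leq_mul2l.
Qed.

Lemma gt0 k j : gt 0 k j = 0.
Proof. by rewrite /gt sub0n bin0n; case: j => [|j] /=; rewrite ?muln0 ?mul0n ?mulr0. Qed.
Lemma gt1 k j : gt 1 k j = 0.
Proof. by rewrite /gt; case: j => [|j] /=; rewrite ?subSS ?sub0n ?bin0n ?muln0 ?mul0n ?mulr0. Qed.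
Lemma ft0 k j : ft 0 k j.+1 = 0.
Proof. by rewrite /ft sub0n bin0n /= mul0n mulr0. Qed.
Lemma ft1 k j : ft 1 k j.+1 = 0.
Proof. by rewrite /ft subSS sub0n bin0n /= mul0n mulr0. Qed.
Lemma gtz n k : gt n k 0 = 0.
Proof. by rewrite /gt /= !mul0n mulr0. Qed.

Lemma FG_closed n : forall k N, (n <= k)%N -> (n < N)%N ->
  Fsum N n k = Fc n k /\ Gsum N n k = Lc n k.
Proof.
elim/ltn_ind: n => n IH k N hnk hnN.
case: N hnN => [//|N] hnN.
case: n IH hnk hnN => [|[|n]] IH hnk hnN.
- split.
  + rewrite /Fsum big_ord_recl big1 ?addr0; last first.
      by move=> j _; rewrite ft0.
    by rewrite /ft /= expr0 mul1r mul1n subn0 catalanZ /Fc subn0.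
  + rewrite /Gsum big1; last first.
      by move=> j _; rewrite gt0.
    rewrite /Lc !subn0 /Pb big_ord_recr /= PoszD; ring.
- case: k hnk => [//|k] hnk.
  split.
  + rewrite /Fsum big_ord_recl big1 ?addr0; last first.
      by move=> j _; rewrite ft1.
    rewrite /ft /= expr0 mul1r mul1n subn0 catalanZ /Fc.
    have -> : (k.+1.*2 - 1 = (k.*2).+1)%N by rewrite doubleS.
    rewrite doubleS !binS.
    have -> : 'C(k.*2.+1, k) = 'C(k.*2.+1, k.+1).
      by rewrite -bin_sub; [congr 'C(_, _); lia | lia].
    rewrite !PoszD; ring.
  + rewrite /Gsum big1; last first.
      by move=> j _; rewrite gt1.
    rewrite /Lc subSS subn0 /=; ring.
- case: k hnk => [//|k] hnk.
  have [IHF1 IHG1] := IH n.+1 (ltnSn _) k.+1 N.+1 (ltnW hnk) (ltnW hnN).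
  have [IHF0 IHG0] := IH n (leqW (ltnSn _)) k N ltac:(lia) ltac:(lia).
  have e1 : (k.+1.*2 - n.+2 = k.*2 - n)%N by rewrite doubleS subSS.
  have e2 : (k.+1.*2 - n.+1 = (k.*2 - n).+1)%N by rewrite doubleS subSS subSn //; lia.
  split.
  + have -> : Fc n.+2 k.+1 = Fc n.+1 k.+1 - Fc n k.
      by rewrite /Fc e1 e2 !binS !PoszD; ring.
    rewrite -IHF1 -IHF0 /Fsum !big_ord_recl.
    have -> : ft n.+2 k.+1 (@ord0 N) = ft n.+1 k.+1 (@ord0 N) by rewrite /ft /= !subn0 !bin0.
    rewrite (eq_bigr (fun i : 'I_N => ft n.+1 k.+1 (lift ord0 i) - ft n k i)); last first.
      by move=> i _; rewrite lift0 /= ft_rec.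
    by rewrite sumrB !addrA.
  + have -> : Lc n.+2 k.+1 = Lc n.+1 k.+1 - Lc n k + Fc n k.
      rewrite /Lc /Fc e1 e2.
      have [a ea] : exists a, (k - n = a.+1)%N by exists (k - n).-1; lia.
      have -> : (k.+1 - n.+2).+1 = a.+1 by lia.
      have -> : (k.+1 - n.+1).+1 = a.+2 by lia.
      rewrite !PbS binS !PoszD.
      rewrite -[n.+2]addn2 -[n.+1]addn1 !PoszD.
      ring.
    rewrite -IHG1 -IHG0 -IHF0 /Gsum /Fsum !big_ord_recl !gtz.
    rewrite (eq_bigr (fun i : 'I_N => gt n.+1 k.+1 (lift ord0 i) - gt n k i + ft n k i)); last first.
      by move=> i _; rewrite lift0 /= gt_rec.
    by rewrite big_split /= sumrB !add0r.
Qed.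
Definition cnt1 (w : seq bool) := count id w.
Definition cnt0 (w : seq bool) := count negb w.
Fixpoint words m : seq (seq bool) :=
  if m is m'.+1 then [seq true :: w | w <- words m'] ++ [seq false :: w | w <- words m']
  else [:: [::]].
Definition okw M (w : seq bool) :=
  all (fun t => cnt1 (take t w) <= M + cnt0 (take t w))%N (iota 0 (size w).+1).
Definition goodT k (w : seq bool) :=
  all (fun t => cnt1 (take t w) + cnt0 (drop t w) < k)%N (iota 0 (size w).+1).
Definition good k w := ((cnt0 w < k)%N && okw (k.-1 - cnt0 w) w).
Definition W m z M := count (fun w => (cnt0 w == z) && okw M w) (words m).

Lemma cons_inj (b : bool) : injective (cons b).
Proof. by move=> x y [].
Qed.

Lemma all_iota1 (P : pred nat) n : all P (iota 1 n) = all (fun t => P t.+1) (iota 0 n).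
Proof. by rewrite (_ : iota 1 n = map (addn 1) (iota 0 n)) ?all_map // -iotaDl. Qed.

Lemma mem_words m w : (w \in words m) = (size w == m).
Proof.
elim: m w => [|m IH] [|b w] //=.
  by rewrite mem_cat; apply/negP => /orP[] /mapP[].
rewrite mem_cat; case: b; rewrite (mem_map (cons_inj _)) IH eqSS.
  by apply/orP/idP => [[//|/mapP[? _ //]]|]; left.
by apply/orP/idP => [[/mapP[? _ //]|//]|]; right.
Qed.

Lemma uniq_words m : uniq (words m).
Proof.
elim: m => //= m IH; rewrite cat_uniq !map_inj_uniq ?IH //=; try exact: cons_inj.
rewrite andbT; apply/hasPn => w /mapP[v _ ->]; apply/mapP => -[u _] //.
Qed.

Lemma all_iota0S (P : pred nat) n :
  all P (iota 0 n.+1) = P 0 && all (fun t => P t.+1) (iota 0 n).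
Proof. by rewrite -[all P (iota 0 n.+1)]/(P 0 && all P (iota 1 n)) all_iota1. Qed.

Lemma okw_true M w : okw M (true :: w) = (0 < M)%N && okw M.-1 w.
Proof.
rewrite /okw [size _]/= all_iota0S.
case: M => [|M].
  by rewrite all_iota0S /= take0.
rewrite /= take0 /=; apply: eq_all => t /=; rewrite /cnt1 /cnt0 /=.
apply/idP/idP; lia.
Qed.

Lemma okw_false M w : okw M (false :: w) = okw M.+1 w.
Proof.
rewrite /okw [size _]/= all_iota0S /= take0 /=.
apply: eq_all => t /=; rewrite /cnt1 /cnt0 /=.
apply/idP/idP; lia.
Qed.


Lemma W_S m z M : W m.+1 z M =
  ((if (0 < M)%N then W m z M.-1 else 0) + (if z is z'.+1 then W m z' M.+1 else 0))%N.
Proof.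
rewrite /W /= count_cat !count_map; congr (_ + _).
  case: M => [|M] /=.
    by rewrite (eq_count (a2 := pred0)) ?count_pred0 // => w /=; rewrite okw_true andbF.
  by apply: eq_count => w /=; rewrite okw_true /cnt0 /=.
case: z => [|z].
  by rewrite (eq_count (a2 := pred0)) ?count_pred0.
by apply: eq_count => w /=; rewrite okw_false /cnt0 /= eqSS.
Qed.

Lemma W_closed m : forall z M, (m - z <= z + M)%N ->
  (W m z M)%:Z = ('C(m, z))%:Z - ('C(m, (z + M).+1))%:Z.
Proof.
elim: m => [|m IH] z M h.
  rewrite /W /= /okw /= addn0.
  by case: z h => [|z] h /=; rewrite ?bin0n.
rewrite W_S PoszD.
case: M h => [|M] h; case: z h => [|z] h /=.
- lia.
- rewrite add0r IH; last by lia.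
  rewrite addn0 !binS !PoszD addn1; ring.
- rewrite addr0 IH; last by lia.
  rewrite !binS !add0n !bin0 (bin_small (n := m) (m := M.+2)); last by lia.
  rewrite !PoszD; ring.
- rewrite IH; last by lia.
  rewrite IH; last by lia.
  rewrite !binS !PoszD.
  have -> : (z.+1 + M).+1 = (z + M).+2 by lia.
  have -> : (z + M.+2).+1 = (z + M).+3 by lia.
  have -> : (z.+1 + M.+1).+1 = (z + M).+3 by lia.
  rewrite addSn addnS.
  ring.
Qed.

Lemma cnt10 w : (cnt1 w + cnt0 w = size w)%N.
Proof. exact: (count_predC id w). Qed.

Lemma cnt0_td t w : cnt0 w = (cnt0 (take t w) + cnt0 (drop t w))%N.
Proof. by rewrite -{1}(cat_take_drop t w) /cnt0 count_cat. Qed.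

Lemma W_zero m z M : (z + M < m - z)%N -> W m z M = 0%N.
Proof.
move=> h; rewrite /W; apply/eqP; rewrite -leqn0 leqNgt -has_count.
apply/hasPn => w Hw /=; apply/negP => /andP[/eqP hz hok].
move: Hw; rewrite mem_words => /eqP hs.
move/allP: hok => /(_ (size w)); rewrite mem_iota /= take_size add0n ltnSn => /(_ isT) H.
have e : (cnt1 w + cnt0 w = m)%N by rewrite -hs cnt10.
lia.
Qed.

Lemma goodT_good k w : (0 < k)%N -> goodT k w = good k w.
Proof.
move=> hk; rewrite /goodT /good /okw; apply/idP/idP.
  move/allP => H; have h0 := H 0%N; rewrite mem_iota /= take0 drop0 in h0.
  have h0' := h0 isT.
  apply/andP; split; first by move: h0'; rewrite /cnt1 /=.
  apply/allP => t Ht; have := H t Ht; have := cnt0_td t w; lia.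
case/andP => h0 /allP H; apply/allP => t Ht.
have := H t Ht; have := cnt0_td t w; have := count_size negb (take t w); lia.
Qed.

Lemma count_split (T : Type) (g : T -> nat) (Q : nat -> T -> bool) K s :
  count (fun x => (g x < K)%N && Q (g x) x) s =
  (\sum_(z < K) count (fun x => (g x == z) && Q z x) s)%N.
Proof.
elim: K => [|K IH].
  by rewrite big_ord0 (eq_count (a2 := pred0)) ?count_pred0 // => x; rewrite ltn0.
rewrite big_ord_recr /= -IH.
have := count_predUI (fun x => (g x < K)%N && Q (g x) x) (fun x => (g x == K) && Q K x) s.
rewrite (eq_count (a1 := predI _ _) (a2 := pred0)) ?count_pred0 ?addn0; last first.
  by move=> x /=; case: (g x =P K) => [->|_]; rewrite ?ltnn ?andbF.
move <-; apply: eq_count => x /=.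
case: (g x =P K) => [->|/eqP ne]; first by rewrite ltnn ltnSn.
by rewrite orbF ltnS leq_eqVlt (negbTE ne).
Qed.

Lemma Pb_split m a k (h : (a <= k)%N) : Pb m k = (Pb m a + \sum_(a <= i < k) 'C(m, i))%N.
Proof.
rewrite /Pb -!(big_mkord xpredT (fun i => 'C(m, i))).
by rewrite (big_cat_nat _ (n := a)).
Qed.

Lemma count_goodT k m : (1 <= k)%N -> (k <= m)%N -> (m < k.*2)%N ->
  (count (goodT k) (words m))%:Z =
  (Pb m k)%:Z - (Pb m (m - k).+1)%:Z - ((k.*2 - m)%:Z - 1) * ('C(m, k))%:Z.
Proof.
move=> hk hkm hm.
rewrite (eq_count (a2 := good k)); last by move=> w; exact: goodT_good.
rewrite /good (@count_split _ cnt0 (fun z w => okw (k.-1 - z) w)).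
rewrite (big_morph Posz PoszD (erefl (Posz 0))).
set a := (m - k).+1.
have hak : (a <= k)%N by rewrite /a; lia.
rewrite -(big_mkord xpredT (fun z => Posz (count (fun x => (cnt0 x == z) && okw (k.-1 - z) x) (words m)))).
rewrite (big_cat_nat _ (n := a)) //=.
rewrite (eq_big_nat _ _ (F2 := fun _ => 0)); last first.
  move=> z /andP[_ hz]; rewrite -/(W m z (k.-1 - z)) W_zero //; rewrite /a in hz; lia.
rewrite (eq_big_nat _ _ (m := a) (n := k) (F2 := fun z => ('C(m, z))%:Z - ('C(m, k))%:Z)); last first.
  move=> z /andP[h1 h2]; rewrite /a in h1; rewrite [LHS](W_closed m z (k.-1 - z)); last by lia.
  by have -> : (z + (k.-1 - z)).+1 = k by lia.
rewrite sumr_const_nat mul0rn add0r sumrB sumr_const_nat.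
rewrite (Pb_split m a k hak) PoszD (big_morph Posz PoszD (erefl (Posz 0))).
rewrite -mulr_natr natz.
have -> : Posz (k - a) = (k.*2 - m)%:Z - 1 by rewrite subzn; [congr Posz; rewrite /a; lia | lia].
ring.
Qed.

Local Close Scope ring_scope.

Definition onl (w : seq bool) := filter (nth false w) (iota 0 (size w)).
Definition zel (w : seq bool) := filter (predC (nth false w)) (iota 0 (size w)).
Definition line w := onl w ++ zel w.

Lemma perm_line w : perm_eq (line w) (iota 0 (size w)).
Proof. by rewrite /line /onl /zel perm_filterC perm_refl. Qed.

Lemma size_line w : size (line w) = size w.
Proof. by rewrite (perm_size (perm_line w)) size_iota. Qed.

Lemma uniq_line w : uniq (line w).
Proof. by rewrite (perm_uniq (perm_line w)) iota_uniq. Qed.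

Lemma mem_line w x : (x \in line w) = (x < size w).
Proof. by rewrite (perm_mem (perm_line w)) mem_iota. Qed.

Lemma nth_line_lt w i : i < size w -> nth 0 (line w) i < size w.
Proof. by move=> h; rewrite -mem_line mem_nth // size_line. Qed.

Lemma sorted_onl w : sorted ltn (onl w).
Proof. by apply: sorted_filter; [exact: ltn_trans | exact: iota_ltn_sorted]. Qed.

Lemma sorted_zel w : sorted ltn (zel w).
Proof. by apply: sorted_filter; [exact: ltn_trans | exact: iota_ltn_sorted]. Qed.

Lemma mem_onl w x : (x \in onl w) = (x < size w) && nth false w x.
Proof. by rewrite mem_filter mem_iota andbC. Qed.

Lemma mem_zel w x : (x \in zel w) = (x < size w) && ~~ nth false w x.
Proof. by rewrite mem_filter mem_iota andbC. Qed.

Lemma size_onzel w : size (onl w) + size (zel w) = size w.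
Proof. by rewrite -size_cat -/(line w) size_line. Qed.

Lemma line_blocks w i j : i < j < size w ->
  (j < size (onl w)) || (size (onl w) <= i) -> nth 0 (line w) i < nth 0 (line w) j.
Proof.
move=> /andP[hij hj] /orP[h|h]; rewrite /line !nth_cat.
  have hi : i < size (onl w) by apply: ltn_trans h.
  rewrite hi h; apply: (sorted_ltn_nth ltn_trans) => //; exact: sorted_onl.
have hj' : size (onl w) <= j by apply: leq_trans (ltnW hij).
have -> : (i < size (onl w)) = false by rewrite ltnNge h.
have -> : (j < size (onl w)) = false by rewrite ltnNge hj'.
have := size_onzel w => hs.
apply: (sorted_ltn_nth ltn_trans) => //; first exact: sorted_zel.
  by rewrite inE; lia.
  by rewrite inE; lia.
lia.
Qed.

Lemma nth_line_on w i : i < size (onl w) -> nth false w (nth 0 (line w) i).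
Proof.
move=> h; rewrite /line nth_cat h.
by have := mem_nth 0 h; rewrite mem_onl => /andP[].
Qed.

Lemma nth_line_ze w i : size (onl w) <= i < size w -> ~~ nth false w (nth 0 (line w) i).
Proof.
move=> /andP[h1 h2]; rewrite /line nth_cat.
have -> : (i < size (onl w)) = false by rewrite ltnNge h1.
have := size_onzel w => hs.
have h : i - size (onl w) < size (zel w) by lia.
by have := mem_nth 0 h; rewrite mem_zel => /andP[].
Qed.

Definition Pf m w (i : 'I_m) : 'I_m := insubd i (nth 0 (line w) i).

Lemma val_Pf m w i : size w = m -> val (Pf m w i) = nth 0 (line w) i.
Proof.
move=> hs; have h : nth 0 (line w) i < m by move: (nth_line_lt w i); rewrite hs; apply.
by rewrite val_insubd h.
Qed.

Lemma Pf_inj m w : size w = m -> injective (Pf m w).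
Proof.
move=> hs i j /(congr1 val); rewrite !val_Pf // => e.
apply: val_inj; apply/eqP; rewrite -(nth_uniq 0 _ _ (uniq_line w)) ?size_line ?hs.
by rewrite e.
exact: ltn_ord.
exact: ltn_ord.
Qed.

Definition Pw m w : 'S_m :=
  match injectiveP (Pf m w) with ReflectT h => perm h | ReflectF _ => 1%g end.

Lemma PwE m w i : size w = m -> val (Pw m w i) = nth 0 (line w) i.
Proof.
move=> hs; rewrite /Pw; case: injectiveP => [h|h]; first by rewrite permE val_Pf.
by case: h; exact: Pf_inj.
Qed.

Lemma containsP m k (s : 'S_m) :
  reflect (exists f : 'I_k -> 'I_m, forall a b : 'I_k, a < b -> (f a < f b) && (s (f a) < s (f b)))
          (contains s (id_pat k)).
Proof.
rewrite /contains /id_pat; apply: (iffP existsP) => [[f /forallP H]|[f H]].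
  exists f => a b hab; have /forallP/(_ b) := H a.
  by rewrite !perm1 hab /= => /andP[-> /eqP ->].
exists [ffun a => f a]; apply/forallP => a; apply/forallP => b; rewrite !ffunE !perm1.
case: (ltngtP a b) => h.
- by have /andP[-> ->] := H a b h.
- have /andP[_ h2] := H b a h.
  by rewrite /= ltnNge (ltnW h2).
- have e : a = b by apply: val_inj.
  by rewrite e !ltnn.
Qed.

Lemma take_iota (w : seq bool) t : t <= size w -> take t w = map (nth false w) (iota 0 t).
Proof.
move=> h; apply: (@eq_from_nth _ false); first by rewrite size_takel // size_map size_iota.
move=> i; rewrite size_takel // => hi.
by rewrite nth_take // (nth_map 0) ?size_iota // nth_iota.
Qed.

Lemma drop_iota (w : seq bool) t : t <= size w ->
  drop t w = map (nth false w) (iota t (size w - t)).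
Proof.
move=> h; apply: (@eq_from_nth _ false); first by rewrite size_drop size_map size_iota.
move=> i; rewrite size_drop => hi.
by rewrite nth_drop (nth_map 0) ?size_iota // nth_iota.
Qed.

Lemma cnt_take (w : seq bool) t (p : pred bool) : t <= size w ->
  count (fun v => p (nth false w v)) (iota 0 t) = count p (take t w).
Proof. by move=> h; rewrite take_iota // count_map. Qed.

Lemma cnt_drop (w : seq bool) t (p : pred bool) : t <= size w ->
  count (fun v => p (nth false w v)) (iota t (size w - t)) = count p (drop t w).
Proof. by move=> h; rewrite drop_iota // count_map. Qed.

Lemma cnt_split (w : seq bool) t : t <= size w ->
  count (fun v => if v < t then nth false w v else ~~ nth false w v) (iota 0 (size w))
  = cnt1 (take t w) + cnt0 (drop t w).
Proof.
move=> h.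
have e : size w = t + (size w - t) by rewrite subnKC.
rewrite {1}e iotaD count_cat add0n.
rewrite (@eq_in_count _ _ (fun v => id (nth false w v)) (iota 0 t)); last first.
  by move=> v; rewrite mem_iota => /andP[_ ->].
rewrite (@eq_in_count _ _ (fun v => negb (nth false w v)) (iota t _)); last first.
  by move=> v; rewrite mem_iota => /andP[hv _]; rewrite ltnNge hv.
by rewrite (cnt_take w t id h) (cnt_drop w t negb h).
Qed.

Lemma contains_notgood m k w : size w = m ->
  contains (Pw m w) (id_pat k) -> ~~ goodT k w.
Proof.
move=> hs /containsP[f H].
set L := line w; set d := size (onl w).
pose v (a : 'I_k) := nth 0 L (f a).
have vE a : v a = val (Pw m w (f a)) by rewrite PwE.
have Hs (a b : 'I_k) : a < b -> (f a < f b) && (v a < v b) by move=> hab; rewrite !vE; exact: H.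
have vlt (a : 'I_k) : v a < m by rewrite vE ltn_ord.
have fmono (a b : 'I_k) : a <= b -> f a <= f b.
  rewrite leq_eqVlt => /orP[/eqP e|hab]; first by rewrite (val_inj e).
  by have /andP[/ltnW -> _] := Hs a b hab.
pose t := \max_(a | f a < d) (v a).+1.
have ht1 (a : 'I_k) : f a < d -> v a < t.
  move=> h; exact: (@leq_bigmax_cond _ (fun a => f a < d) (fun a => (v a).+1) a h).
have ht2 (a : 'I_k) : d <= f a -> t <= v a.
  move=> h; apply/bigmax_leqP => b hb.
  have hba : b < a by rewrite ltnNge; apply/negP => hab; have := fmono _ _ hab; lia.
  by have /andP[_ ->] := Hs b a hba.
have htm : t <= m by apply/bigmax_leqP => b _; exact: vlt.
apply/negP => /allP /(_ t); rewrite mem_iota add0n ltnS hs htm => /(_ isT).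
rewrite -cnt_split ?hs // ltnNge => /negP; apply; rewrite -size_filter.
have -> : k = size [seq v a | a <- enum 'I_k] by rewrite size_map size_enum_ord.
apply: uniq_leq_size.
  rewrite map_inj_uniq ?enum_uniq // => a b e.
  case: (ltngtP a b) => h.
  - by have /andP[_] := Hs a b h; rewrite e ltnn.
  - by have /andP[_] := Hs b a h; rewrite e ltnn.
  - exact: val_inj.
move=> x /mapP[a _ ->]; rewrite mem_filter mem_iota /= vlt andbT.
case: (ltnP (f a) d) => h.
  by rewrite ht1 //; apply: nth_line_on.
rewrite ltnNge ht2 //=; apply: nth_line_ze; by rewrite h hs ltn_ord.
Qed.

Lemma notgood_contains m k w : size w = m ->
  ~~ goodT k w -> contains (Pw m w) (id_pat k).
Proof.
move=> hs /allPn [t Ht Hbad].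
rewrite mem_iota add0n ltnS in Ht; rewrite -leqNgt in Hbad.
set W := nth false w.
have eon : onl w = filter W (iota 0 t) ++ filter W (iota t (size w - t)).
  by rewrite /onl -filter_cat -iotaD subnKC.
have eze : zel w = filter (predC W) (iota 0 t) ++ filter (predC W) (iota t (size w - t)).
  by rewrite /zel -filter_cat -iotaD subnKC.
set r := size (filter W (iota 0 t)).
have hr : r = cnt1 (take t w) by rewrite /r size_filter /cnt1 -(cnt_take w t id Ht).
set q := size (filter (predC W) (iota 0 t)).
set c2 := size (filter (predC W) (iota t (size w - t))).
have hc2 : c2 = cnt0 (drop t w) by rewrite /c2 size_filter /cnt0 -(cnt_drop w t negb Ht).
set d := size (onl w).
have hrd : r <= d by rewrite /d eon size_cat leq_addr.
have hze : size (zel w) = q + c2 by rewrite eze size_cat.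
have hsz := size_onzel w; rewrite -/d hze in hsz.
have hk : k <= r + c2 by rewrite hr hc2.
have hkm : k <= m by rewrite -hs -hsz; lia.
have A a : a < r -> nth 0 (line w) a < t.
  move=> ha; rewrite /line nth_cat (leq_trans ha hrd) eon nth_cat ha.
  by have := mem_nth 0 ha; rewrite mem_filter mem_iota => /andP[_ /andP[_]].
have B x : x < c2 -> t <= nth 0 (line w) (d + q + x).
  move=> hx; rewrite /line nth_cat ltnNge -addnA leq_addr /= -/d addKn eze nth_cat.
  rewrite ltnNge leq_addr /= addKn.
  by have := mem_nth 0 hx; rewrite mem_filter mem_iota => /andP[_ /andP[]].
pose fa a := if a < r then a else d + q + (a - r).
have fa_lt a : a < k -> fa a < m.
  by rewrite /fa; case: ifP => h1 h2; lia.
pose F (a : 'I_k) : 'I_m := insubd (widen_ord hkm a) (fa a).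
have FE a : val (F a) = fa a by rewrite val_insubd fa_lt ?ltn_ord.
apply/containsP; exists F => a b hab; rewrite !PwE // !FE.
have hbk := ltn_ord b.
case: (ltnP b r) => hb.
  have ha : a < r by apply: ltn_trans hb.
  rewrite /fa ha hb hab /=; apply: line_blocks; last by rewrite (leq_trans hb hrd).
  by rewrite hab /= hs; lia.
case: (ltnP a r) => ha.
  rewrite /fa ha; have -> : (b < r) = false by rewrite ltnNge hb.
  apply/andP; split; first by lia.
  apply: (leq_trans (A a ha)); apply: B; lia.
rewrite /fa; have -> : (b < r) = false by rewrite ltnNge hb.
have -> : (a < r) = false by rewrite ltnNge ha.
apply/andP; split; first by lia.
apply: line_blocks; last by apply/orP; right; lia.
rewrite hs; apply/andP; split; lia.
Qed.

Lemma contains_Pw m k w : size w = m ->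
  contains (Pw m w) (id_pat k) = ~~ goodT k w.
Proof.
move=> hs; apply/idP/idP; first exact: contains_notgood.
exact: notgood_contains.
Qed.

Lemma grass_Pw m w : size w = m -> grassmannian (Pw m w).
Proof.
move=> hs.
have key (x j : 'I_m) : val j = (val x).+1 -> Pw m w j < Pw m w x -> (val x).+1 = size (onl w).
  move=> hj; rewrite !PwE // => hlt.
  case: (boolP ((val j < size (onl w)) || (size (onl w) <= val x))) => h.
    have := line_blocks w (val x) (val j) _ h; rewrite hj ltnSn /= hs -hj ltn_ord => /(_ isT).
    by move=> h2; have := ltn_trans h2 hlt; rewrite ltnn.
  move: h; rewrite negb_or -leqNgt -ltnNge => /andP[h1 h2].
  by apply/eqP; rewrite eqn_leq h2 -hj h1.
apply/card_le1_eqP => x y; rewrite !inE => /existsP[j /andP[/eqP hj hlt]] /existsP[j' /andP[/eqP hj' hlt']].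
apply: val_inj; apply/eqP; rewrite -eqSS (key _ _ hj hlt) (key _ _ hj' hlt'). by [].
Qed.

Lemma grass_surj m (s : 'S_m) : grassmannian s -> exists w, size w = m /\ Pw m w = s.
Proof.
move=> hg.
pose Ls := [seq val (s i) | i <- enum 'I_m].
have sLs : size Ls = m by rewrite size_map size_enum_ord.
have nLs (i : 'I_m) : nth 0 Ls i = val (s i).
  by rewrite (nth_map i) ?size_enum_ord // nth_ord_enum.
pose d := if [pick i in descents s] is Some i then (val i).+1 else m.
have hdm : d <= m by rewrite /d; case: pickP => // i _; exact: ltn_ord.
have step (i : nat) : i.+1 < m -> i.+1 != d -> nth 0 Ls i < nth 0 Ls i.+1.
  move=> hi hne.
  pose x := Ordinal (ltnW hi); pose y := Ordinal hi.
  have := nLs x; have := nLs y; rewrite /= => -> ->.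
  have hx : x \notin descents s.
    apply/negP => hx; move: hne; rewrite /d; case: pickP => [i0 hi0|hn].
      move/card_le1_eqP: hg => /(_ x i0 hx hi0) e.
      by rewrite e /= eqxx.
    by rewrite hn in hx.
  move: hx; rewrite inE negb_exists => /forallP /(_ y); rewrite /= eqxx /= -leqNgt => hle.
  rewrite ltn_neqAle hle andbT; apply/negP => /eqP /val_inj /perm_inj /(congr1 val) /=.
  lia.
pose w := [seq val ((s^-1)%g v) < d | v <- enum 'I_m].
have sw : size w = m by rewrite size_map size_enum_ord.
have nw (v : 'I_m) : nth false w v = (val ((s^-1)%g v) < d).
  by rewrite (nth_map v) ?size_enum_ord // nth_ord_enum.
have on_eq : onl w = take d Ls.
  apply: (@irr_sorted_eq _ ltn ltn_trans ltnn); first exact: sorted_onl.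
    apply/(sortedP 0) => i; rewrite size_takel ?sLs // => hi.
    rewrite !nth_take //; last by lia.
    apply: step; lia.
  move=> x; rewrite mem_onl sw; apply/idP/idP.
    case/andP => hx; pose v := Ordinal hx; have := nw v; rewrite /= => -> hw.
    apply/(nthP 0); exists (val ((s^-1)%g v)); first by rewrite size_takel ?sLs.
    by rewrite nth_take // nLs permKV.
  move/(nthP 0) => [i]; rewrite size_takel ?sLs // => hi <-.
  have him : i < m by lia.
  rewrite nth_take //; have := nLs (Ordinal him); rewrite /= => ->.
  by rewrite ltn_ord /= nw permK.
have ze_eq : zel w = drop d Ls.
  apply: (@irr_sorted_eq _ ltn ltn_trans ltnn); first exact: sorted_zel.
    apply/(sortedP 0) => i; rewrite size_drop sLs => hi.
    rewrite !nth_drop addnS; apply: step; lia.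
  move=> x; rewrite mem_zel sw; apply/idP/idP.
    case/andP => hx; pose v := Ordinal hx; have := nw v; rewrite /= => -> hw.
    rewrite -leqNgt in hw.
    apply/(nthP 0); exists (val ((s^-1)%g v) - d); first by rewrite size_drop sLs; apply: ltn_sub2r; [exact: leq_ltn_trans hw (ltn_ord _) | exact: ltn_ord].
    by rewrite nth_drop subnKC // nLs permKV.
  move/(nthP 0) => [i]; rewrite size_drop sLs => hi <-.
  have him : d + i < m by lia.
  rewrite nth_drop; have := nLs (Ordinal him); rewrite /= => ->.
  by rewrite ltn_ord /= nw permK /= -leqNgt leq_addr.
have hline : line w = Ls by rewrite /line on_eq ze_eq cat_take_drop.
exists w; split => //.
by apply/permP => i; apply: val_inj; rewrite PwE // hline nLs.
Qed.

Lemma overlap m w1 w2 : size w1 = m -> size w2 = m -> line w1 = line w2 ->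
  size (onl w1) < size (onl w2) ->
  forall i j, i < j < m -> nth 0 (line w1) i < nth 0 (line w1) j.
Proof.
move=> s1 s2 hl hd i j /andP[hij hjm].
have hd2 : size (onl w2) <= m by rewrite -s2 -(size_onzel w2) leq_addr.
case: (ltnP j (size (onl w2))) => hj.
  by rewrite hl; apply: line_blocks; rewrite ?hij ?s2 ?hjm ?hj.
case: (leqP (size (onl w1)) i) => hi.
  by apply: line_blocks; rewrite ?hij ?s1 ?hjm ?hi ?orbT.
apply: (@ltn_trans (nth 0 (line w1) (size (onl w1)))).
  rewrite hl; apply: line_blocks; rewrite ?hi ?hd //= s2; lia.
apply: line_blocks; last by rewrite leqnn orbT.
rewrite s1; apply/andP; split; lia.
Qed.

Lemma sorted_contains m k w : size w = m -> k <= m ->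
  (forall i j, i < j < m -> nth 0 (line w) i < nth 0 (line w) j) ->
  contains (Pw m w) (id_pat k).
Proof.
move=> hs hkm H; apply/containsP; exists (widen_ord hkm) => a b hab.
rewrite !PwE //= hab /=; apply: H; rewrite hab /=.
exact: leq_trans (ltn_ord b) hkm.
Qed.

Lemma Pw_inj_good m k w1 w2 : k <= m -> size w1 = m -> size w2 = m ->
  goodT k w1 -> goodT k w2 -> Pw m w1 = Pw m w2 -> w1 = w2.
Proof.
move=> hkm s1 s2 g1 g2 e.
have hl : line w1 = line w2.
  apply: (@eq_from_nth _ 0); first by rewrite !size_line s1 s2.
  rewrite size_line s1 => i hi.
  have := PwE m w1 (Ordinal hi) s1; have := PwE m w2 (Ordinal hi) s2; rewrite e /= => <- <- //.
case: (ltngtP (size (onl w1)) (size (onl w2))) => hd.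
- have := sorted_contains m k w1 s1 hkm (overlap m w1 w2 s1 s2 hl hd).
  by rewrite contains_Pw // g1.
- have := sorted_contains m k w2 s2 hkm (overlap m w2 w1 s2 s1 (esym hl) hd).
  by rewrite contains_Pw // g2.
have ho : onl w1 = onl w2.
  rewrite -(@take_size_cat _ _ (onl w1) (zel w1) erefl) -/(line w1) hl /line.
  by rewrite take_size_cat.
apply: (@eq_from_nth _ false); first by rewrite s1 s2.
move=> i hi.
have := mem_onl w1 i; have := mem_onl w2 i; rewrite ho s1 s2 -s1 hi => -> /=.
by [].
Qed.

Lemma card_T m k : k <= m ->
  #|[set s : 'S_m | grassmannian s && avoids s (id_pat k)]| = count (goodT k) (words m).
Proof.
move=> hkm.
have U : uniq (map (Pw m) (filter (goodT k) (words m))).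
  rewrite map_inj_in_uniq ?filter_uniq ?uniq_words // => w1 w2.
  rewrite !mem_filter !mem_words => /andP[g1 /eqP s1] /andP[g2 /eqP s2] e.
  exact: (Pw_inj_good m k w1 w2 hkm s1 s2 g1 g2 e).
rewrite -size_filter -(size_map (Pw m)) -(card_uniqP U).
apply: eq_card => s; rewrite inE; apply/andP/mapP.
  case=> hg ha; have [w [sw e]] := grass_surj m s hg.
  exists w => //; rewrite mem_filter mem_words sw eqxx andbT.
  by move: ha; rewrite /avoids -e contains_Pw // negbK.
case=> w; rewrite mem_filter mem_words => /andP[g /eqP sw] ->; split.
  exact: grass_Pw.
by rewrite /avoids contains_Pw // g.
Qed.

Local Open Scope ring_scope.

Theorem theorem3p1 (k m : nat) (hk : (2 <= k)%N) (hkm : (k <= m)%N)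
    (hm : (m <= k.*2 - 2)%N) :
  (#|[set s : 'S_m | grassmannian s && avoids s (id_pat k)]|%:Z : int) =
  \sum_(1 <= j < (k.*2 - m).+1)
     (-1) ^+ (j.-1) * ((j * 'C(k.*2 - m - j, j) * catalan (k - j))%N)%:Z.
Proof.
have hn : (k.*2 - m <= k)%N by lia.
have hk1 : (1 <= k)%N by lia.
have hm2 : (m < k.*2)%N by lia.
have -> : \sum_(1 <= j < (k.*2 - m).+1)
     (-1) ^+ (j.-1) * ((j * 'C(k.*2 - m - j, j) * catalan (k - j))%N)%:Z
     = Gsum (k.*2 - m).+1 (k.*2 - m) k.
  rewrite /Gsum -(big_mkord xpredT (gt (k.*2 - m) k)) big_ltn // gtz add0r.
  by [].
have [_ ->] := FG_closed (k.*2 - m) k (k.*2 - m).+1 hn (ltnSn _).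
have e1 : (k.*2 - (k.*2 - m) = m)%N by lia.
have e2 : (k - (k.*2 - m) = m - k)%N by lia.
rewrite /Lc e1 e2 -count_goodT // card_T //.
Qed.
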